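(* Assume Assumptions A and B. If the solution $S$ of (IVP) exists on $[r_0,\infty)$, then there is $R>r_0$ such that $S$ is monotone on $(R,\infty)$; consequently $s_\infty:=\lim_{r\to\infty}S(r)$ exists (and lies in $[0,1]$).
   Context: Fix an integer $n\ge2$. For $i=1,2$, $g_i(s)=a^{(i)}_0+a^{(i)}_1s^{\alpha^{(i)}_1}+\dots+a^{(i)}_{N_i}s^{\alpha^{(i)}_{N_i}}$ ($s\ge0$) with $N_i\ge0$, $a^{(i)}_0>0$, $a^{(i)}_j\ge0$, real $0<\alpha^{(i)}_1<\dots<\alpha^{(i)}_{N_i}$; $G_i(u)=g_i(|u|)u$ for $u\in\mathbb R$. Assumption A: $f_1,f_2\in C([0,1])\cap C^1((0,1))$, $f_1(0)=0$, $f_2(1)=0$, $f_1'>0$, $f_2'<0$ on $(0,1)$. Assumption B: $p_c'\in C^1((0,1))$, $p_c'>0$ on $(0,1)$. $F_i(S)=1/(p_c'(S)f_i(S))$. Given $r_0>0$, $c_1,c_2\in\mathbb R$, $s_0\in(0,1)$, (IVP) is: $S'(r)=G_2(c_2r^{1-n})F_2(S)-G_1(c_1r^{1-n})F_1(S)$ for $r>r_0$, $S(r_0)=s_0$, $0<S(r)<1$. *)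

(* Defs.v *)
From Stdlib Require Import Reals Lra.
Open Scope R_scope.

(* s^alpha for s >= 0 and alpha > 0 (with 0^alpha = 0); Stdlib's Rpower
   is only meaningful for positive bases. *)
Definition rpow0 (s alpha : R) : R :=
  if Rle_dec s 0 then 0 else Rpower s alpha.

Fixpoint gsum (N : nat) (a alpha : nat -> R) (s : R) : R :=
  match N with
  | O => 0
  | S k => gsum k a alpha s + a (S k) * rpow0 s (alpha (S k))
  end.

Definition gfun (N : nat) (a alpha : nat -> R) (s : R) : R :=
  a O + gsum N a alpha s.

Definition g_data (N : nat) (a alpha : nat -> R) : Prop :=
  0 < a O /\
  (forall j, (1 <= j <= N)%nat -> 0 <= a j) /\
  (forall j, (1 <= j <= N)%nat -> 0 < alpha j) /\
  (forall j, (1 <= j < N)%nat -> alpha j < alpha (S j)).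

Definition Gfun (N : nat) (a alpha : nat -> R) (u : R) : R :=
  gfun N a alpha (Rabs u) * u.

Definition continuous_on_closed (f : R -> R) (a b : R) : Prop :=
  forall x, a <= x <= b -> limit1_in f (fun y => a <= y <= b) (f x) x.

Definition C1_open_with (f f' : R -> R) (a b : R) : Prop :=
  (forall x, a < x < b -> derivable_pt_lim f x (f' x)) /\
  (forall x, a < x < b -> continuity_pt f' x).

Definition Ffun (pcd f : R -> R) (s : R) : R := 1 / (pcd s * f s).

Definition lim_infty (S : R -> R) (l : R) : Prop :=
  forall eps, 0 < eps -> exists M, forall r, M <= r -> Rabs (S r - l) < eps.

(* Main.v *)
Require Import Defs.
From Stdlib Require Import Reals Lra Lia List Classical.
Import ListNotations.
Open Scope R_scope.

Fixpoint gp (l : list (R*R)) (u : R) : R :=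
  match l with nil => 0 | (c,e)::t => c * Rpower u e + gp t u end.

Definition isE (m : R) (p : R*R) : bool := if Req_dec_T (snd p) m then true else false.

Fixpoint fE (m:R) (l : list (R*R)) : list (R*R) :=
  match l with nil => nil | p::t => if isE m p then p :: fE m t else fE m t end.
Fixpoint fN (m:R) (l : list (R*R)) : list (R*R) :=
  match l with nil => nil | p::t => if isE m p then fN m t else p :: fN m t end.
Fixpoint sumc (l : list (R*R)) : R :=
  match l with nil => 0 | p::t => fst p + sumc t end.
Fixpoint minexp (e0 : R) (l : list (R*R)) : R :=
  match l with nil => e0 | p::t => Rmin (snd p) (minexp e0 t) end.
Definition shift (m:R) (l : list (R*R)) := map (fun p => (fst p, snd p - m)) l.

Lemma gp_split m l u : gp l u = gp (fE m l) u + gp (fN m l) u.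
Proof. induction l as [|[c e] t IH]; simpl. lra. destruct (isE m (c,e)); simpl; lra. Qed.

Lemma gp_fE m l u : gp (fE m l) u = sumc (fE m l) * Rpower u m.
Proof. induction l as [|[c e] t IH]; simpl. lra.
  unfold isE; simpl; destruct (Req_dec_T e m); simpl; subst; rewrite ?IH; lra. Qed.

Lemma gp_shift m l u : gp l u = Rpower u m * gp (shift m l) u.
Proof. induction l as [|[c e] t IH]; simpl. lra.
  rewrite IH. replace e with (m + (e - m)) at 1 by lra. rewrite Rpower_plus. ring. Qed.

Lemma len_split m l : (length (fN m l) + length (fE m l) = length l)%nat.
Proof. induction l as [|p t IH]; simpl. auto. destruct (isE m p); simpl; lia. Qed.

Lemma minexp_le e0 l : forall p, In p l -> minexp e0 l <= snd p.
Proof. induction l as [|q t IH]; simpl; intros p H. tauto.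
  destruct H as [<-|H]. apply Rmin_l. specialize (IH p H). eapply Rle_trans. apply Rmin_r. auto. Qed.

Lemma minexp_in c0 e0 l : exists p, In p ((c0,e0)::l) /\ snd p = minexp e0 l.
Proof. induction l as [|q t IH]; simpl. exists (c0,e0); auto.
  destruct IH as [p [Hp Hs]]. unfold Rmin. destruct (Rle_dec (snd q) (minexp e0 t)).
  exists q; simpl in *; tauto. exists p. simpl in *; split; [tauto|auto]. Qed.

Lemma fE_len_pos m l p : In p l -> snd p = m -> (1 <= length (fE m l))%nat.
Proof. induction l as [|q t IH]; simpl; intros H Hs. tauto.
  destruct H as [->|H]. unfold isE; destruct (Req_dec_T (snd p) m); simpl; [lia|tauto].
  destruct (isE m q); simpl; [lia| auto]. Qed.

Lemma fN_in m l p : In p (fN m l) -> In p l /\ snd p <> m.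
Proof. induction l as [|q t IH]; simpl. tauto.
  unfold isE at 1; destruct (Req_dec_T (snd q) m); simpl; intros H.
  destruct (IH H); tauto. destruct H as [<-|H]; auto. destruct (IH H); tauto. Qed.

Lemma shift_in m l p : In p (shift m l) -> exists q, In q l /\ snd p = snd q - m.
Proof. unfold shift. intros H. apply in_map_iff in H. destruct H as [q [<- Hq]]. exists q; simpl; auto. Qed.

Lemma rpow_small e t : 0 < e -> 0 < t -> exists d, 0 < d /\ forall u, 0 < u < d -> Rpower u e < t.
Proof. intros He Ht. exists (exp (ln t / e)). split. apply exp_pos.
  intros u [Hu Hd]. unfold Rpower. rewrite <- (exp_ln t) by auto. apply exp_increasing.
  apply ln_increasing in Hd; auto. rewrite ln_exp in Hd.
  apply (Rmult_lt_compat_l e) in Hd; auto. replace (e * (ln t / e)) with (ln t) in Hd by (field; lra). lra. Qed.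

Lemma gp_small l : (forall p, In p l -> 0 < snd p) ->
  forall eps, 0 < eps -> exists d, 0 < d /\ forall u, 0 < u < d -> Rabs (gp l u) < eps.
Proof. induction l as [|[c e] t IH]; simpl; intros Hp eps He.
  exists 1. split. lra. intros. rewrite Rabs_R0; lra.
  destruct (IH (fun p H => Hp p (or_intror H)) (eps/2)) as [d1 [Hd1 H1]]. lra.
  assert (He' : 0 < e) by (apply (Hp (c,e)); auto).
  destruct (rpow_small e (eps / (2 * (Rabs c + 1))) He') as [d2 [Hd2 H2]].
  apply Rdiv_lt_0_compat. lra. pose proof (Rabs_pos c); lra.
  exists (Rmin d1 d2). split. apply Rmin_glb_lt; auto. intros u [Hu Hd].
  assert (u < d1) by (eapply Rlt_le_trans; [apply Hd|apply Rmin_l]).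
  assert (u < d2) by (eapply Rlt_le_trans; [apply Hd|apply Rmin_r]).
  specialize (H1 u (conj Hu H)). specialize (H2 u (conj Hu H0)).
  assert (Hpos : 0 < Rpower u e) by apply exp_pos.
  pose proof (Rabs_pos c).
  assert (Rabs c * Rpower u e <= (Rabs c + 1) * Rpower u e) by nra.
  assert ((Rabs c + 1) * Rpower u e < (Rabs c + 1) * (eps / (2 * (Rabs c + 1)))) by
    (apply Rmult_lt_compat_l; lra).
  replace ((Rabs c + 1) * (eps / (2 * (Rabs c + 1)))) with (eps/2) in H5 by (field; lra).
  eapply Rle_lt_trans. apply Rabs_triang. rewrite Rabs_mult, (Rabs_right (Rpower u e)) by lra. lra.
Qed.

Lemma gp_sign_n n : forall l, (length l <= n)%nat -> exists d, 0 < d /\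
  ((forall u, 0 < u < d -> 0 <= gp l u) \/ (forall u, 0 < u < d -> gp l u <= 0)).
Proof. induction n as [|n IH]; intros l Hl.
  - destruct l; simpl in Hl; [|lia]. exists 1; split; [lra|left]; simpl; intros; lra.
  - destruct l as [|[c0 e0] t]. exists 1; split; [lra|left]; simpl; intros; lra.
    set (l := (c0,e0)::t). set (m := minexp e0 t).
    destruct (minexp_in c0 e0 t) as [p [Hp Hs]].
    pose proof (fE_len_pos m l p Hp Hs) as HL1. pose proof (len_split m l) as HL2.
    assert (Hsm : forall u, gp l u = sumc (fE m l) * Rpower u m + gp (fN m l) u).
    { intros u. rewrite (gp_split m), gp_fE. auto. }
    destruct (Req_dec_T (sumc (fE m l)) 0) as [HC|HC].
    + destruct (IH (fN m l)) as [d [Hd H]]. simpl in *; lia.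
      exists d; split; auto. destruct H as [H|H]; [left|right]; intros u Hu; rewrite Hsm, HC;
      specialize (H u Hu); lra.
    + set (C := sumc (fE m l)) in *.
      destruct (gp_small (shift m (fN m l))) with (eps := Rabs C / 2) as [d [Hd H]].
      { intros q Hq. destruct (shift_in _ _ _ Hq) as [q' [Hq' ->]]. apply fN_in in Hq'.
        destruct Hq' as [Hin Hne].         assert (m <= snd q').
        { unfold l in Hin. simpl in Hin. destruct Hin as [<-|Hin]. simpl. 
          unfold m. clear. induction t as [|[a b] t IH]; simpl. lra. unfold Rmin at 1.
          destruct (Rle_dec b (minexp e0 t)); lra.
          apply minexp_le; auto. }
        lra. }
      { pose proof (Rabs_pos_lt C HC). lra. }
      exists d; split; auto.
      destruct (Rlt_dec 0 C) as [Cp|Cn]; [left|right]; intros u Hu; rewrite Hsm, (gp_shift m (fN m l));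
      specialize (H u Hu); assert (0 < Rpower u m) by apply exp_pos;
      apply Rabs_def2 in H.
      * rewrite Rabs_right in H by lra. nra.
      * rewrite Rabs_left in H by (destruct (Rtotal_order C 0) as [?|[?|?]]; lra). nra.
Qed.

Lemma gp_sign l : exists d, 0 < d /\
  ((forall u, 0 < u < d -> 0 <= gp l u) \/ (forall u, 0 < u < d -> gp l u <= 0)).
Proof. apply (gp_sign_n (length l)); auto. Qed.

Definition dl (l : list (R*R)) := map (fun p => (fst p * snd p, snd p - 1)) l.
Definition lmul (l m : list (R*R)) :=
  flat_map (fun p => map (fun q => (fst p * fst q, snd p + snd q)) m) l.
Definition lneg (l : list (R*R)) := map (fun p => (- fst p, snd p)) l.

Lemma gp_app l m u : gp (l ++ m) u = gp l u + gp m u.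
Proof. induction l as [|[c e] t IH]; simpl; try rewrite IH; ring. Qed.
Lemma gp_neg l u : gp (lneg l) u = - gp l u.
Proof. induction l as [|[c e] t IH]; simpl; try rewrite IH; ring. Qed.
Lemma gp_mul l m u : gp (lmul l m) u = gp l u * gp m u.
Proof. induction l as [|[c e] t IH].
  - simpl. ring.
  - unfold lmul in *; simpl. rewrite gp_app, IH.
  assert (gp (map (fun q => (c * fst q, e + snd q)) m) u = c * Rpower u e * gp m u).
  { clear IH. induction m as [|[d f] s IH2]; simpl. ring. rewrite IH2, Rpower_plus. ring. }
  rewrite H; ring. Qed.

Lemma gp_deriv l u : 0 < u -> derivable_pt_lim (gp l) u (gp (dl l) u).
Proof. intros Hu. induction l as [|[c e] t IH]; simpl.
  - apply (derivable_pt_lim_const 0).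
  - change (gp ((c,e)::t)) with (fun x => c * Rpower x e + gp t x).
    apply (derivable_pt_lim_plus (fun x => c * Rpower x e) (gp t)); auto.
    replace (c * e * Rpower u (e - 1)) with (c * (e * Rpower u (e-1))) by ring.
    apply (derivable_pt_lim_scal (fun x => Rpower x e)). apply derivable_pt_lim_power; auto.
Qed.

Lemma gp_cont l u : 0 < u -> continuity_pt (gp l) u.
Proof. intros Hu. apply derivable_continuous_pt. exists (gp (dl l) u). apply gp_deriv; auto. Qed.

Lemma ratio_mono L1 L2 : (forall u, 0 < u -> 0 < gp L2 u) -> exists d, 0 < d /\
  ((forall u v, 0 < u -> u <= v -> v < d -> gp L1 u / gp L2 u <= gp L1 v / gp L2 v) \/
   (forall u v, 0 < u -> u <= v -> v < d -> gp L1 v / gp L2 v <= gp L1 u / gp L2 u)).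
Proof. intros Hpos.
  destruct (gp_sign (lmul (dl L1) L2 ++ lneg (lmul L1 (dl L2)))) as [d [Hd Hs]].
  exists d; split; auto.
  assert (Hder : forall x, 0 < x -> derivable_pt_lim (fun y => gp L1 y / gp L2 y) x
     ((gp (dl L1) x * gp L2 x - gp (dl L2) x * gp L1 x) / (gp L2 x)²)).
  { intros x Hx. apply (derivable_pt_lim_div (gp L1) (gp L2)). apply gp_deriv; auto.
    apply gp_deriv; auto. specialize (Hpos x Hx); lra. }
  assert (Hnum : forall x, gp (lmul (dl L1) L2 ++ lneg (lmul L1 (dl L2))) x =
     gp (dl L1) x * gp L2 x - gp (dl L2) x * gp L1 x).
  { intros x. rewrite gp_app, gp_neg, !gp_mul. ring. }
  destruct Hs as [Hs|Hs]; [left|right]; intros u v Hu Huv Hv;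
  destruct (Rle_lt_or_eq_dec _ _ Huv) as [Hlt|Heq]; try (subst; lra);
  destruct (MVT_cor2 (fun y => gp L1 y / gp L2 y) (fun x => (gp (dl L1) x * gp L2 x - gp (dl L2) x * gp L1 x) / (gp L2 x)²) u v Hlt) as [c [Hc Hcin]];
  try (intros; apply Hder; lra);
  assert (0 < (gp L2 c)²) by (unfold Rsqr; specialize (Hpos c ltac:(lra)); nra);
  specialize (Hs c ltac:(lra)); rewrite Hnum in Hs;
  assert (Hi : 0 < / (gp L2 c)²) by (apply Rinv_0_lt_compat; auto);
  unfold Rdiv in Hc; simpl in Hc;
  set (q := gp (dl L1) c * gp L2 c - gp (dl L2) c * gp L1 c) in *;
  [ assert (0 <= q * / (gp L2 c)² * (v - u)) by (apply Rmult_le_pos; [apply Rmult_le_pos|]; lra)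
  | assert (0 <= (- q) * / (gp L2 c)² * (v - u)) by (apply Rmult_le_pos; [apply Rmult_le_pos|]; lra)];
  unfold Rdiv; lra.
Qed.

Fixpoint Lgs (N : nat) (a al : nat -> R) (b : R) : list (R*R) :=
  match N with O => nil | S k => (a (S k) * Rpower b (al (S k)), al (S k)) :: Lgs k a al b end.
Definition Lg N a al b := (a O, 0) :: Lgs N a al b.

Lemma gfun_gp N a al b u : 0 < b -> 0 < u -> gfun N a al (b * u) = gp (Lg N a al b) u.
Proof. intros Hb Hu. unfold gfun, Lg. simpl. rewrite Rpower_O by auto.
  assert (gsum N a al (b*u) = gp (Lgs N a al b) u).
  { induction N as [|k IH]; simpl. auto. rewrite IH. unfold rpow0.
    destruct (Rle_dec (b*u) 0). nra. rewrite <- Rpower_mult_distr by auto. ring. }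
  rewrite H. ring. Qed.

Lemma rpow0_nonneg s al : 0 <= rpow0 s al.
Proof. unfold rpow0. destruct (Rle_dec s 0). lra. left; apply exp_pos. Qed.

Lemma gfun_pos N a al s : g_data N a al -> 0 < gfun N a al s.
Proof. intros [H0 [Ha _]]. unfold gfun.
  assert (0 <= gsum N a al s).
  { clear H0. induction N as [|k IH]; simpl. lra.
    assert (0 <= a (S k)) by (apply Ha; lia). pose proof (rpow0_nonneg s (al (S k))).
    assert (0 <= gsum k a al s) by (apply IH; intros; apply Ha; lia). nra. }
  lra. Qed.

Lemma closed_trap (E : R -> R) R0 :
  (forall x, R0 < x -> continuity_pt E x) ->
  (forall a b, R0 < a -> a < b -> (forall x, a < x < b -> 0 < E x) -> E b <= E a) ->
  forall r1 r2, R0 < r1 -> r1 <= r2 -> E r1 <= 0 -> E r2 <= 0.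
Proof. intros Hc Hm r1 r2 H1 H12 HE1.
  destruct (Rle_dec (E r2) 0) as [|Hn]; auto. exfalso.
  set (P := fun x => r1 <= x <= r2 /\ E x <= 0).
  destruct (completeness P) as [r3 [Hub Hlub]].
  { exists r2. intros x [Hx _]. lra. }
  { exists r1. split; lra. }
  assert (Hr13 : r1 <= r3) by (apply Hub; split; lra).
  assert (Hr32 : r3 <= r2) by (apply Hlub; intros x [Hx _]; lra).
  assert (HE3 : E r3 <= 0).
  { destruct (Rle_dec (E r3) 0) as [|Hp]; auto. exfalso.
    destruct (Hc r3 ltac:(lra) (E r3) ltac:(lra)) as [eta [Heta Hx]].
    assert (~ is_upper_bound P (r3 - eta/2)).
    { intros Hu. specialize (Hlub _ Hu). lra. }
    apply H. intros x Px. destruct (Rle_dec x (r3 - eta/2)) as [|Hx']; auto. exfalso.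
    assert (x <= r3) by (apply Hub; auto).
    destruct (Req_dec x r3) as [->|Hne]. destruct Px; lra.
    specialize (Hx x). simpl in Hx. unfold R_dist, D_x, no_cond in Hx.
    assert (HA : Rabs (E x - E r3) < E r3).
    { apply Hx. split. split; auto. rewrite Rabs_left; lra. }
    apply Rabs_def2 in HA. destruct Px; lra. }
  assert (r3 < r2) by (destruct (Req_dec r3 r2); subst; lra).
  assert (E r2 <= E r3).
  { apply Hm; try lra. intros x Hx. destruct (Rlt_dec 0 (E x)) as [|Hn']; auto. exfalso.
    assert (x <= r3) by (apply Hub; split; lra). lra. }
  lra. Qed.

Lemma open_trap (E : R -> R) R0 :
  (forall x, R0 < x -> continuity_pt E x) ->
  (forall a b, R0 < a -> a < b -> (forall x, a < x < b -> E x < 0) -> E b <= E a) ->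
  forall r1 r2, R0 < r1 -> r1 <= r2 -> E r1 < 0 -> E r2 < 0.
Proof. intros Hc Hm r1 r2 H1 H12 HE1.
  destruct (Rlt_dec (E r2) 0) as [|Hn]; auto. exfalso.
  set (P := fun x => r1 <= x <= r2 /\ forall y, r1 <= y <= x -> E y < 0).
  destruct (completeness P) as [r3 [Hub Hlub]].
  { exists r2. intros x [Hx _]. lra. }
  { exists r1. split. lra. intros y Hy. replace y with r1 by lra. auto. }
  assert (Hr13 : r1 <= r3) by (apply Hub; split; [lra| intros y Hy; replace y with r1 by lra; auto]).
  assert (Hr32 : r3 <= r2) by (apply Hlub; intros x [Hx _]; lra).
  assert (Hbelow : forall y, r1 <= y < r3 -> E y < 0).
  { intros y Hy. destruct (Rlt_dec (E y) 0) as [|Hn']; auto. exfalso.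
    assert (is_upper_bound P y).
    { intros x [Hx Hall]. destruct (Rle_dec x y) as [|Hxy]; auto. exfalso.
      specialize (Hall y ltac:(lra)). lra. }
    specialize (Hlub _ H). lra. }
  assert (HE3 : 0 <= E r3).
  { destruct (Rle_dec 0 (E r3)) as [|Hp]; auto. exfalso.
    destruct (Req_dec r3 r2) as [->|Hne]. lra.
    destruct (Hc r3 ltac:(lra) (- E r3) ltac:(lra)) as [eta [Heta Hx]].
    set (z := Rmin (r3 + eta/2) r2).
    assert (r3 < z) by (unfold z; apply Rmin_glb_lt; lra).
    assert (z <= r2) by apply Rmin_r. assert (z <= r3 + eta/2) by apply Rmin_l.
    assert (P z).
    { split. lra. intros y Hy. destruct (Rlt_dec y r3). apply Hbelow; lra.
      destruct (Req_dec y r3) as [->|Hne']. lra.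
      specialize (Hx y). simpl in Hx. unfold R_dist, D_x, no_cond in Hx.
      assert (HA : Rabs (E y - E r3) < - E r3).
      { apply Hx. split. split; auto. rewrite Rabs_right; lra. }
      apply Rabs_def2 in HA. lra. }
    specialize (Hub z H3). lra. }
  assert (r1 < r3) by (destruct (Req_dec r1 r3); subst; lra).
  assert (E r3 <= E r1).
  { apply Hm; try lra. intros x Hx. apply Hbelow; lra. }
  lra. Qed.

Lemma mono_up (T T' : R -> R) R0 :
  (forall r, R0 < r -> derivable_pt_lim T r (T' r)) ->
  forall a b, R0 < a -> a <= b -> (forall x, a < x < b -> 0 <= T' x) -> T a <= T b.
Proof. intros Hd a b Ha Hab Hs. destruct (Rle_lt_or_eq_dec _ _ Hab) as [Hlt| ->]; [|lra].
  destruct (MVT_cor2 T T' a b Hlt) as [c [Hc Hcin]]. intros; apply Hd; lra.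
  specialize (Hs c Hcin). nra. Qed.

Lemma mono_down (T T' : R -> R) R0 :
  (forall r, R0 < r -> derivable_pt_lim T r (T' r)) ->
  forall a b, R0 < a -> a <= b -> (forall x, a < x < b -> T' x <= 0) -> T b <= T a.
Proof. intros Hd a b Ha Hab Hs. destruct (Rle_lt_or_eq_dec _ _ Hab) as [Hlt| ->]; [|lra].
  destruct (MVT_cor2 T T' a b Hlt) as [c [Hc Hcin]]. intros; apply Hd; lra.
  specialize (Hs c Hcin). nra. Qed.

Lemma lim_incr (T : R -> R) R0 : (forall x y, R0 < x -> x <= y -> T x <= T y) ->
  (forall r, R0 < r -> 0 < T r < 1) -> exists l, 0 <= l <= 1 /\ lim_infty T l.
Proof. intros Hm Hb.
  set (P := fun y => exists x, R0 < x /\ y = T x).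
  destruct (completeness P) as [l [Hub Hlub]].
  { exists 1. intros y [x [Hx ->]]. specialize (Hb x Hx). lra. }
  { exists (T (R0+1)). exists (R0+1). split; auto; lra. }
  assert (T (R0+1) <= l) by (apply Hub; exists (R0+1); split; auto; lra).
  specialize (Hb (R0+1) ltac:(lra)) as Hb1.
  exists l. split. split. lra. apply Hlub. intros y [x [Hx ->]]. specialize (Hb x Hx). lra.
  intros eps He. destruct (Rlt_dec l (T (R0+1) + eps)) as [Hl|Hl].
  - exists (R0+1). intros r Hr. assert (T (R0+1) <= T r) by (apply Hm; lra).
    assert (T r <= l) by (apply Hub; exists r; split; auto; lra).
    apply Rabs_def1; lra.
  - assert (~ is_upper_bound P (l - eps)) by (intros Hu; specialize (Hlub _ Hu); lra).
    destruct (not_all_ex_not _ _ H0) as [y Hy].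
    apply imply_to_and in Hy. destruct Hy as [[x [Hx ->]] Hy].
    exists x. intros r Hr. assert (T x <= T r) by (apply Hm; lra).
    assert (T r <= l) by (apply Hub; exists r; split; auto; lra).
    apply Rabs_def1; lra.
Qed.

Lemma lim_decr (T : R -> R) R0 : (forall x y, R0 < x -> x <= y -> T y <= T x) ->
  (forall r, R0 < r -> 0 < T r < 1) -> exists l, 0 <= l <= 1 /\ lim_infty T l.
Proof. intros Hm Hb. destruct (lim_incr (fun x => 1 - T x) R0) as [l [Hl Hlim]].
  intros x y Hx Hy. specialize (Hm x y Hx Hy). lra.
  intros r Hr. specialize (Hb r Hr). lra.
  exists (1 - l). split. lra. intros eps He. destruct (Hlim eps He) as [M HM].
  exists M. intros r Hr. specialize (HM r Hr). replace (T r - (1 - l)) with (-(1 - T r - l)) by ring.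
  rewrite Rabs_Ropp. auto. Qed.

Lemma cont_minus f g x : continuity_pt f x -> continuity_pt g x -> continuity_pt (fun y => f y - g y) x.
Proof. intros; exact (continuity_pt_minus f g x H H0). Qed.
Lemma cont_div f g x : continuity_pt f x -> continuity_pt g x -> g x <> 0 -> continuity_pt (fun y => f y / g y) x.
Proof. intros; exact (continuity_pt_div f g x H H0 H1). Qed.
Lemma cont_opp f x : continuity_pt f x -> continuity_pt (fun y => - f y) x.
Proof. intros; exact (continuity_pt_opp f x H). Qed.
Lemma cont_scal f a x : continuity_pt f x -> continuity_pt (fun y => a * f y) x.
Proof. intros; exact (continuity_pt_scal f a x H). Qed.
Lemma cont_comp f g x : continuity_pt g x -> continuity_pt f (g x) -> continuity_pt (fun y => f (g y)) x.
Proof. intros; exact (continuity_pt_comp g f x H H0). Qed.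
Lemma cont_der f x l : derivable_pt_lim f x l -> continuity_pt f x.
Proof. intros H. apply derivable_continuous_pt. exists l; auto. Qed.

Lemma strict_up f fd : C1_open_with f fd 0 1 -> (forall s, 0 < s < 1 -> 0 < fd s) ->
  forall x y, 0 < x -> x < y -> y < 1 -> f x < f y.
Proof. intros [Hd _] Hp x y Hx Hxy Hy.
  destruct (MVT_cor2 f fd x y Hxy) as [c [Hc Hcin]]. intros; apply Hd; lra.
  specialize (Hp c ltac:(lra)). nra. Qed.

Lemma strict_down f fd : C1_open_with f fd 0 1 -> (forall s, 0 < s < 1 -> fd s < 0) ->
  forall x y, 0 < x -> x < y -> y < 1 -> f y < f x.
Proof. intros [Hd _] Hp x y Hx Hxy Hy.
  destruct (MVT_cor2 f fd x y Hxy) as [c [Hc Hcin]]. intros; apply Hd; lra.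
  specialize (Hp c ltac:(lra)). nra. Qed.

Lemma f1_pos f fd : continuous_on_closed f 0 1 -> C1_open_with f fd 0 1 -> f 0 = 0 ->
  (forall s, 0 < s < 1 -> 0 < fd s) -> forall s, 0 < s < 1 -> 0 < f s.
Proof. intros Hc Hd H0 Hp s Hs.
  assert (Hh : 0 <= f (s/2)).
  { destruct (Rle_dec 0 (f (s/2))) as [|Hn]; auto. exfalso.
    destruct (Hc 0 ltac:(lra) (- f (s/2)) ltac:(lra)) as [al [Hal Hx]].
    set (y := Rmin (al/2) (s/4)).
    assert (0 < y) by (unfold y; apply Rmin_glb_lt; lra).
    assert (y <= al/2) by apply Rmin_l. assert (y <= s/4) by apply Rmin_r.
    specialize (Hx y). simpl in Hx. unfold R_dist in Hx. rewrite H0 in Hx.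
    assert (HA : Rabs (f y - 0) < - f (s/2)). { apply Hx. split. lra. rewrite Rminus_0_r, Rabs_right; lra. }
    apply Rabs_def2 in HA. pose proof (strict_up f fd Hd Hp y (s/2)). lra. }
  pose proof (strict_up f fd Hd Hp (s/2) s). lra. Qed.

Lemma f2_pos f fd : continuous_on_closed f 0 1 -> C1_open_with f fd 0 1 -> f 1 = 0 ->
  (forall s, 0 < s < 1 -> fd s < 0) -> forall s, 0 < s < 1 -> 0 < f s.
Proof. intros Hc Hd H0 Hp s Hs.
  set (h := (1+s)/2).
  assert (Hh : 0 <= f h).
  { destruct (Rle_dec 0 (f h)) as [|Hn]; auto. exfalso.
    destruct (Hc 1 ltac:(lra) (- f h) ltac:(lra)) as [al [Hal Hx]].
    set (y := 1 - Rmin (al/2) ((1-s)/4)).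
    assert (0 < Rmin (al/2) ((1-s)/4)) by (apply Rmin_glb_lt; lra).
    assert (Rmin (al/2) ((1-s)/4) <= al/2) by apply Rmin_l. assert (Rmin (al/2) ((1-s)/4) <= (1-s)/4) by apply Rmin_r.
    specialize (Hx y). simpl in Hx. unfold R_dist in Hx. rewrite H0 in Hx.
    assert (HA : Rabs (f y - 0) < - f h). { apply Hx. unfold y. split. lra. rewrite Rabs_left; lra. }
    apply Rabs_def2 in HA. pose proof (strict_down f fd Hd Hp h y). unfold y, h in *. lra. }
  pose proof (strict_down f fd Hd Hp s h). unfold h in *. lra. Qed.

Lemma w_pos p r : 0 < Rpower r p.
Proof. apply exp_pos. Qed.
Lemma w_decr p x y : p < 0 -> 0 < x -> x <= y -> Rpower y p <= Rpower x p.
Proof. intros Hp Hx Hxy. unfold Rpower. destruct (Rle_lt_or_eq_dec _ _ Hxy) as [Hl| ->]; [|lra].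
  left. apply exp_increasing. assert (ln x < ln y) by (apply ln_increasing; lra). nra. Qed.
Lemma w_small p d : p < 0 -> 0 < d -> exists R, 0 < R /\ forall r, R < r -> Rpower r p < d.
Proof. intros Hp Hd. exists (exp (ln d / p)). split. apply exp_pos. intros r Hr.
  unfold Rpower. rewrite <- (exp_ln d) by auto. apply exp_increasing.
  assert (0 < r) by (pose proof (exp_pos (ln d / p)); lra).
  apply ln_increasing in Hr; [|apply exp_pos]. rewrite ln_exp in Hr.
  apply (Rmult_lt_compat_l (-p)) in Hr; [|lra].
  replace (-p * (ln d / p)) with (- ln d) in Hr by (field; lra). lra. Qed.

Lemma conclude (S Sd : R -> R) r0 R1 : r0 <= R1 ->
  (forall r, r0 < r -> derivable_pt_lim S r (Sd r)) ->
  ((forall r, R1 < r -> 0 <= Sd r) \/ (forall r, R1 < r -> Sd r <= 0)) ->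
  exists R0, r0 < R0 /\ ((forall x y, R0 < x -> x <= y -> S x <= S y) \/
                         (forall x y, R0 < x -> x <= y -> S y <= S x)).
Proof. intros HR Hd [H|H]; exists (R1+1); split; try lra; [left|right]; intros x y Hx Hxy.
  apply (mono_up S Sd r0 Hd); try lra. intros; apply H; lra.
  apply (mono_down S Sd r0 Hd); try lra. intros; apply H; lra. Qed.

Lemma hard (S Sd K psi phi : R -> R) r0 R1 : r0 <= R1 ->
  (forall r, r0 < r -> derivable_pt_lim S r (Sd r)) ->
  (forall r, R1 < r -> continuity_pt (fun r => phi (S r) - psi r) r) ->
  (forall r, r0 < r -> Sd r = K r * (phi (S r) - psi r)) ->
  ((forall r, r0 < r -> 0 < K r) \/ (forall r, r0 < r -> K r < 0)) ->
  (forall a b, r0 < a -> r0 < b -> S a <= S b -> phi (S a) <= phi (S b)) ->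
  ((forall x y, R1 < x -> x <= y -> psi x <= psi y) \/ (forall x y, R1 < x -> x <= y -> psi y <= psi x)) ->
  exists R2, r0 <= R2 /\ ((forall r, R2 < r -> 0 <= Sd r) \/ (forall r, R2 < r -> Sd r <= 0)).
Proof.
  intros HR Hd Hc HSd HK Hphi Hpsi.
  set (E := fun r => phi (S r) - psi r) in *.
  assert (Hc' : forall r, R1 < r -> continuity_pt (fun r => - E r) r) by (intros; apply cont_opp; auto).
  destruct HK as [HK|HK]; destruct Hpsi as [Hpsi|Hpsi].
  - assert (Ht := open_trap E R1 Hc).
    destruct (classic (exists r1, R1 < r1 /\ E r1 < 0)) as [[r1 [Hr1 HE]]|Hno].
    + exists r1. split. lra. right. intros r Hr. rewrite HSd by lra.
      assert (E r < 0). { apply (Ht) with r1; try lra; auto.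
        intros a b Ha Hab Hneg. assert (S b <= S a).
        { apply (mono_down S Sd r0 Hd); try lra. intros x Hx. rewrite HSd by lra.
          specialize (HK x ltac:(lra)); specialize (Hneg x Hx). unfold E in Hneg. nra. }
        unfold E. pose proof (Hphi b a ltac:(lra) ltac:(lra) H). pose proof (Hpsi a b Ha ltac:(lra)). lra. }
      specialize (HK r ltac:(lra)). unfold E in H. nra.
    + exists R1. split. auto. left. intros r Hr. rewrite HSd by lra.
      assert (0 <= E r). { destruct (Rle_dec 0 (E r)); auto. exfalso. apply Hno. exists r. split; auto; lra. }
      specialize (HK r ltac:(lra)). unfold E in H. nra.
  - assert (Ht := open_trap (fun r => - E r) R1 Hc').
    destruct (classic (exists r1, R1 < r1 /\ 0 < E r1)) as [[r1 [Hr1 HE]]|Hno].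
    + exists r1. split. lra. left. intros r Hr. rewrite HSd by lra.
      assert (- E r < 0). { apply (Ht) with r1; try lra; auto.
        intros a b Ha Hab Hneg. assert (S a <= S b).
        { apply (mono_up S Sd r0 Hd); try lra. intros x Hx. rewrite HSd by lra.
          specialize (HK x ltac:(lra)); specialize (Hneg x Hx). unfold E in Hneg. nra. }
        unfold E. pose proof (Hphi a b ltac:(lra) ltac:(lra) H). pose proof (Hpsi a b Ha ltac:(lra)). lra. }
      specialize (HK r ltac:(lra)). unfold E in H. nra.
    + exists R1. split. auto. right. intros r Hr. rewrite HSd by lra.
      assert (E r <= 0). { destruct (Rle_dec (E r) 0); auto. exfalso. apply Hno. exists r. split; auto; lra. }
      specialize (HK r ltac:(lra)). unfold E in H. nra.
  - assert (Ht := closed_trap E R1 Hc).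
    destruct (classic (exists r1, R1 < r1 /\ E r1 <= 0)) as [[r1 [Hr1 HE]]|Hno].
    + exists r1. split. lra. left. intros r Hr. rewrite HSd by lra.
      assert (E r <= 0). { apply (Ht) with r1; try lra; auto.
        intros a b Ha Hab Hpos. assert (S b <= S a).
        { apply (mono_down S Sd r0 Hd); try lra. intros x Hx. rewrite HSd by lra.
          specialize (HK x ltac:(lra)); specialize (Hpos x Hx). unfold E in Hpos. nra. }
        unfold E. pose proof (Hphi b a ltac:(lra) ltac:(lra) H). pose proof (Hpsi a b Ha ltac:(lra)). lra. }
      specialize (HK r ltac:(lra)). unfold E in H. nra.
    + exists R1. split. auto. right. intros r Hr. rewrite HSd by lra.
      assert (0 < E r). { destruct (Rlt_dec 0 (E r)); auto. exfalso. apply Hno. exists r. split; auto; lra. }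
      specialize (HK r ltac:(lra)). unfold E in H. nra.
  - assert (Ht := closed_trap (fun r => - E r) R1 Hc').
    destruct (classic (exists r1, R1 < r1 /\ 0 <= E r1)) as [[r1 [Hr1 HE]]|Hno].
    + exists r1. split. lra. right. intros r Hr. rewrite HSd by lra.
      assert (- E r <= 0). { apply (Ht) with r1; try lra; auto.
        intros a b Ha Hab Hpos. assert (S a <= S b).
        { apply (mono_up S Sd r0 Hd); try lra. intros x Hx. rewrite HSd by lra.
          specialize (HK x ltac:(lra)); specialize (Hpos x Hx). unfold E in Hpos. nra. }
        unfold E. pose proof (Hphi a b ltac:(lra) ltac:(lra) H). pose proof (Hpsi a b Ha ltac:(lra)). lra. }
      specialize (HK r ltac:(lra)). unfold E in H. nra.
    + exists R1. split. auto. left. intros r Hr. rewrite HSd by lra.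
      assert (E r < 0). { destruct (Rlt_dec (E r) 0); auto. exfalso. apply Hno. exists r. split; auto; lra. }
      specialize (HK r ltac:(lra)). unfold E in H. nra.
Qed.

Theorem theorem2p3
  (n : nat) (hn : (2 <= n)%nat)
  (N1 N2 : nat) (a1 alpha1 a2 alpha2 : nat -> R)
  (hg1 : g_data N1 a1 alpha1) (hg2 : g_data N2 a2 alpha2)
  (f1 f2 f1d f2d : R -> R)
  (hf1c : continuous_on_closed f1 0 1) (hf2c : continuous_on_closed f2 0 1)
  (hf1d : C1_open_with f1 f1d 0 1) (hf2d : C1_open_with f2 f2d 0 1)
  (hf10 : f1 0 = 0) (hf21 : f2 1 = 0)
  (hf1pos : forall s, 0 < s < 1 -> 0 < f1d s)
  (hf2neg : forall s, 0 < s < 1 -> f2d s < 0)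
  (pcd pcdd : R -> R)
  (hpc : C1_open_with pcd pcdd 0 1)
  (hpcpos : forall s, 0 < s < 1 -> 0 < pcd s)
  (r0 c1 c2 s0 : R) (hr0 : 0 < r0) (hs0 : 0 < s0 < 1)
  (S : R -> R)
  (hSr0 : S r0 = s0)
  (hScont : limit1_in S (fun r => r0 <= r) s0 r0)
  (hSode : forall r, r0 < r ->
     derivable_pt_lim S r
       (Gfun N2 a2 alpha2 (c2 * Rpower r (1 - INR n)) * Ffun pcd f2 (S r)
        - Gfun N1 a1 alpha1 (c1 * Rpower r (1 - INR n)) * Ffun pcd f1 (S r)))
  (hSbd : forall r, r0 <= r -> 0 < S r < 1) :
  (exists R0, r0 < R0 /\
     ((forall x y, R0 < x -> x <= y -> S x <= S y) \/
      (forall x y, R0 < x -> x <= y -> S y <= S x)))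
  /\ (exists l, 0 <= l <= 1 /\ lim_infty S l).
Proof.
  assert (Hmono : exists R0, r0 < R0 /\
     ((forall x y, R0 < x -> x <= y -> S x <= S y) \/
      (forall x y, R0 < x -> x <= y -> S y <= S x))).
  2:{ split; auto. destruct Hmono as [R0 [HR [H|H]]].
      apply (lim_incr S R0 H). intros; apply hSbd; lra.
      apply (lim_decr S R0 H). intros; apply hSbd; lra. }
  set (p := 1 - INR n).
  assert (Hp : p < 0). { unfold p. apply le_INR in hn. simpl in hn. lra. }
  set (w := fun r => Rpower r p).
  set (Sd := fun r => Gfun N2 a2 alpha2 (c2 * w r) * Ffun pcd f2 (S r)
        - Gfun N1 a1 alpha1 (c1 * w r) * Ffun pcd f1 (S r)).
  assert (HSd : forall r, r0 < r -> derivable_pt_lim S r (Sd r)) by (intros; apply hSode; auto).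
  set (G1 := fun r => gfun N1 a1 alpha1 (Rabs c1 * w r)).
  set (G2 := fun r => gfun N2 a2 alpha2 (Rabs c2 * w r)).
  assert (HG1 : forall r, 0 < G1 r) by (intros; apply gfun_pos; auto).
  assert (HG2 : forall r, 0 < G2 r) by (intros; apply gfun_pos; auto).
  assert (Hf1 : forall r, r0 <= r -> 0 < f1 (S r))
    by (intros; apply (f1_pos f1 f1d); auto).
  assert (Hf2 : forall r, r0 <= r -> 0 < f2 (S r))
    by (intros; apply (f2_pos f2 f2d); auto).
  assert (Hpc : forall r, r0 <= r -> 0 < pcd (S r)) by (intros; apply hpcpos; auto).
  assert (HSdE : forall r, r0 < r -> Sd r =
     w r * (c2 * G2 r / (pcd (S r) * f2 (S r)) - c1 * G1 r / (pcd (S r) * f1 (S r)))).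
  { intros r Hr. unfold Sd, Gfun, Ffun, G1, G2.
    assert (0 < w r) by apply w_pos.
    rewrite !Rabs_mult, (Rabs_right (w r)) by lra.
    specialize (Hf1 r ltac:(lra)); specialize (Hf2 r ltac:(lra)); specialize (Hpc r ltac:(lra)).
    field; split; lra. }
  assert (Hpq : forall r, r0 < r -> 0 < w r / (pcd (S r) * f2 (S r)) /\ 0 < w r / (pcd (S r) * f1 (S r))).
  { intros r Hr. specialize (Hf1 r ltac:(lra)); specialize (Hf2 r ltac:(lra)); specialize (Hpc r ltac:(lra)).
    pose proof (w_pos p r). split; apply Rdiv_lt_0_compat; auto; apply Rmult_lt_0_compat; auto. }
  destruct (classic ((0 <= c2 /\ c1 <= 0) \/ (c2 <= 0 /\ 0 <= c1))) as [[[Hc2 Hc1]|[Hc2 Hc1]]|Hh].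
  - apply (conclude S Sd r0 r0); [lra|auto|]. left. intros r Hr. rewrite HSdE by auto.
    destruct (Hpq r Hr) as [Q1 Q2]. specialize (HG1 r); specialize (HG2 r).
    unfold Rdiv in *.
    assert (0 <= c2 * G2 r * / (pcd (S r) * f2 (S r)) * w r).
    { replace (c2 * G2 r * / (pcd (S r) * f2 (S r)) * w r) with (c2 * G2 r * (w r * / (pcd (S r) * f2 (S r)))) by ring.
      apply Rmult_le_pos; [apply Rmult_le_pos|]; lra. }
    assert (0 <= - c1 * G1 r * / (pcd (S r) * f1 (S r)) * w r).
    { replace (- c1 * G1 r * / (pcd (S r) * f1 (S r)) * w r) with (- c1 * G1 r * (w r * / (pcd (S r) * f1 (S r)))) by ring.
      apply Rmult_le_pos; [apply Rmult_le_pos|]; lra. }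
    nra.
  - apply (conclude S Sd r0 r0); [lra|auto|]. right. intros r Hr. rewrite HSdE by auto.
    destruct (Hpq r Hr) as [Q1 Q2]. specialize (HG1 r); specialize (HG2 r).
    unfold Rdiv in *.
    assert (0 <= - c2 * G2 r * / (pcd (S r) * f2 (S r)) * w r).
    { replace (- c2 * G2 r * / (pcd (S r) * f2 (S r)) * w r) with (- c2 * G2 r * (w r * / (pcd (S r) * f2 (S r)))) by ring.
      apply Rmult_le_pos; [apply Rmult_le_pos|]; lra. }
    assert (0 <= c1 * G1 r * / (pcd (S r) * f1 (S r)) * w r).
    { replace (c1 * G1 r * / (pcd (S r) * f1 (S r)) * w r) with (c1 * G1 r * (w r * / (pcd (S r) * f1 (S r)))) by ring.
      apply Rmult_le_pos; [apply Rmult_le_pos|]; lra. }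
    nra.
  - assert (Hsg : (0 < c1 /\ 0 < c2) \/ (c1 < 0 /\ c2 < 0)).
    { destruct (Rtotal_order c1 0) as [?|[?|?]]; destruct (Rtotal_order c2 0) as [?|[?|?]];
      try (exfalso; apply Hh; lra); lra. }
    assert (Hc1a : 0 < Rabs c1) by (apply Rabs_pos_lt; lra).
    assert (Hc2a : 0 < Rabs c2) by (apply Rabs_pos_lt; lra).
    assert (Hcc : 0 < c1 / c2) by (destruct Hsg as [[? ?]|[? ?]];
       [apply Rdiv_lt_0_compat; lra| replace (c1/c2) with ((-c1)/(-c2)) by (field; lra); apply Rdiv_lt_0_compat; lra]).
    set (L1 := Lg N1 a1 alpha1 (Rabs c1)). set (L2 := Lg N2 a2 alpha2 (Rabs c2)).
    assert (HL1 : forall r, G1 r = gp L1 (w r)) by (intros; unfold G1; apply gfun_gp; auto; apply w_pos).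
    assert (HL2 : forall r, G2 r = gp L2 (w r)) by (intros; unfold G2; apply gfun_gp; auto; apply w_pos).
    assert (HL2p : forall u, 0 < u -> 0 < gp L2 u) by (intros u Hu; unfold L2; rewrite <- gfun_gp; auto; apply gfun_pos; auto).
    destruct (ratio_mono L1 L2 HL2p) as [d [Hd Hdir]].
    destruct (w_small p d Hp Hd) as [R' [HR' Hw]].
    set (R1 := Rmax r0 R').
    assert (HR1a : r0 <= R1) by apply Rmax_l. assert (HR1b : R' <= R1) by apply Rmax_r.
    set (K := fun r => w r * c2 * G2 r / (pcd (S r) * f1 (S r))).
    set (psi := fun r => c1 / c2 * (gp L1 (w r) / gp L2 (w r))).
    set (phi := fun s => f1 s / f2 s).
    destruct (hard S Sd K psi phi r0 R1) as [R2 [HR2 Hres]]; auto.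
    + intros r Hr. unfold phi, psi. cbv beta.
      assert (HSc : continuity_pt S r) by (apply (cont_der S r (Sd r)); apply HSd; lra).
      assert (HSr := hSbd r ltac:(lra)).
      assert (Hwr : continuity_pt w r) by (apply (cont_der w r (p * Rpower r (p - 1))); apply derivable_pt_lim_power; lra).
      pose proof (w_pos p r) as Hw0.
      apply cont_minus.
      * apply cont_div. apply (cont_comp f1 S); auto. apply (cont_der f1 _ (f1d (S r))). apply hf1d; auto.
        apply (cont_comp f2 S); auto. apply (cont_der f2 _ (f2d (S r))). apply hf2d; auto.
        specialize (Hf2 r ltac:(lra)). lra.
      * apply cont_scal. apply cont_div. apply (cont_comp (gp L1) w); auto. apply gp_cont; auto.
        apply (cont_comp (gp L2) w); auto. apply gp_cont; auto. specialize (HL2p (w r) Hw0). lra.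
    + intros r Hr. rewrite HSdE by auto. unfold K, psi, phi. rewrite <- HL1, <- HL2.
      specialize (Hf1 r ltac:(lra)); specialize (Hf2 r ltac:(lra)); specialize (Hpc r ltac:(lra)).
      specialize (HG1 r); specialize (HG2 r).
      field. repeat split; lra.
    + destruct Hsg as [[? ?]|[? ?]]; [left|right]; intros r Hr; destruct (Hpq r Hr) as [Q1 Q2];
      specialize (HG2 r); unfold K;
      replace (w r * c2 * G2 r / (pcd (S r) * f1 (S r))) with (c2 * G2 r * (w r / (pcd (S r) * f1 (S r)))) by (unfold Rdiv; ring).
      apply Rmult_lt_0_compat; [apply Rmult_lt_0_compat|]; lra.
      assert (0 < - c2 * G2 r * (w r / (pcd (S r) * f1 (S r)))) by (apply Rmult_lt_0_compat; [apply Rmult_lt_0_compat|]; lra). lra.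
    + intros a b Ha Hb Hab. unfold phi.
      pose proof (hSbd a ltac:(lra)). pose proof (hSbd b ltac:(lra)).
      pose proof (Hf1 a ltac:(lra)). pose proof (Hf2 b ltac:(lra)). pose proof (Hf2 a ltac:(lra)).
      destruct (Rle_lt_or_eq_dec _ _ Hab) as [Hlt|Heq]; [|rewrite Heq; lra].
      pose proof (strict_up f1 f1d hf1d hf1pos (S a) (S b) ltac:(lra) Hlt ltac:(lra)).
      pose proof (strict_down f2 f2d hf2d hf2neg (S a) (S b) ltac:(lra) Hlt ltac:(lra)).
      unfold Rdiv. apply Rmult_le_compat; try lra. left; apply Rinv_0_lt_compat; lra.
      apply Rinv_le_contravar; lra.
    + assert (Hw' : forall x y, R1 < x -> x <= y -> 0 < w y /\ w y <= w x /\ w x < d).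
      { intros x y Hx Hxy. split. apply w_pos. split. apply w_decr; lra. apply Hw; lra. }
      destruct Hdir as [Hdir|Hdir]; [right|left]; intros x y Hx Hxy; destruct (Hw' x y Hx Hxy) as [? [? ?]];
      unfold psi; apply Rmult_le_compat_l; try lra; apply Hdir; lra.
    + apply (conclude S Sd r0 R2); auto.
Qed.
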